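(* Let $L_r^n\subset\mathbb{A}^n$ be the cone over $r$ points of $\mathbb{P}^{n-1}$ in general position. Then for every integer $\ell>0$ \[\dim_\k T^1_\ell\ \ge\ \max\Big\{0,\ (n-1)\Big(r-\binom{n+\ell}{\ell+1}\Big)-\binom{n+\ell-1}{\ell+1}\Big\}.\]
   Context: Ground field $\k$ algebraically closed, characteristic $0$. A set of $r$ points in $\mathbb{P}^{n-1}$ is in general position if for every $\ell\ge1$ it imposes $\min(r,\binom{n+\ell-1}{\ell})$ independent conditions on forms of degree $\ell$. $T^1=\operatorname{Coker}\big(\Theta_n\otimes\mathcal{O}\to\operatorname{Hom}_{\mathcal{O}_n}(I,\mathcal{O})\big)$ for the homogeneous ideal $I$ of $L_r^n$ (all variables of weight $1$), graded so that $T^1_\ell$ is the image of homomorphisms sending each homogeneous generator of degree $q$ to an element of degree $q+\ell$. *)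

(* Defs.v *)
From HB Require Import structures.
From mathcomp Require Import all_boot all_order all_algebra.
From mathcomp Require Import mpoly.
Set Implicit Arguments. Unset Strict Implicit. Unset Printing Implicit Defensive.
Import Order.TTheory GRing.Theory Num.Theory.
Local Open Scope ring_scope.

Section Cone.
Variables (k : fieldType) (n r : nat).
(* points of P^{n-1}, given by (nonzero) representatives in k^n *)
Variable P : 'I_r -> 'rV[k]_n.

Definition evalAt (v : 'rV[k]_n) (f : {mpoly k[n]}) : k :=
  meval (fun j => v 0 j) f.

(* the ideal I of the cone L = union of the lines through the points P i *)
Definition inConeIdeal (f : {mpoly k[n]}) : Prop :=
  forall (i : 'I_r) (t : k), evalAt (t *: P i) f = 0.

(* the points impose exactly s independent conditions on forms of degree l:
   the image of the evaluation map (forms of degree l) -> k^r has dimension s *)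
Definition imposes_conditions (l s : nat) : Prop :=
  exists B : 'M[k]_(s, r),
    [/\ row_free B,
        (forall i : 'I_s, exists f : {mpoly k[n]},
            f \is l.-homog /\ row i B = \row_(j < r) evalAt (P j) f)
      & (forall f : {mpoly k[n]}, f \is l.-homog ->
            (\row_(j < r) evalAt (P j) f <= B)%MS)].

Definition general_position : Prop :=
  [/\ (forall i, P i != 0),
      (forall i j, i != j -> forall c : k, P i != c *: P j)
    & (forall l : nat, (0 < l)%N -> imposes_conditions l (minn r 'C(n + l - 1, l)))].

(* a function phi : I -> O = S/I given by representatives in S (values on I
   matter only, and only modulo I) is an S-module homomorphism *)
Definition isHomIO (phi : {mpoly k[n]} -> {mpoly k[n]}) : Prop :=
  forall f g a b : {mpoly k[n]}, inConeIdeal f -> inConeIdeal g ->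
    inConeIdeal (phi (a * f + b * g) - (a * phi f + b * phi g)).

Definition homDeg (l : nat) (phi : {mpoly k[n]} -> {mpoly k[n]}) : Prop :=
  forall (q : nat) (f : {mpoly k[n]}), inConeIdeal f -> f \is q.-homog ->
    exists h : {mpoly k[n]}, h \is (q + l)%N.-homog /\ inConeIdeal (phi f - h).

Definition derivApply (g : 'I_n -> {mpoly k[n]}) (f : {mpoly k[n]}) : {mpoly k[n]} :=
  \sum_(i < n) g i * mderiv i f.

(* dim_k T^1_l >= m: there are m homomorphisms I -> O of degree l whose classes
   modulo the image of the degree-l derivations (Theta_n (x) O)_l are linearly
   independent *)
Definition T1_dim_ge (l m : nat) : Prop :=
  exists phi : 'I_m -> {mpoly k[n]} -> {mpoly k[n]},
    (forall j, isHomIO (phi j) /\ homDeg l (phi j)) /\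
    (forall (c : 'I_m -> k) (g : 'I_n -> {mpoly k[n]}),
       (forall i, g i \is (l + 1)%N.-homog) ->
       (forall f, inConeIdeal f ->
          inConeIdeal (\sum_(j < m) c j *: phi j f - derivApply g f)) ->
       forall j, c j = 0).
End Cone.

(* Main.v *)
From HB Require Import structures.
From mathcomp Require Import all_boot all_order all_algebra.
From mathcomp Require Import mpoly.
From mathcomp Require Import zify ring lra.
From Stdlib Require Import Classical IndefiniteDescription.
Require Import Defs.
Import Order.TTheory GRing.Theory Num.Theory.
Local Open Scope ring_scope.
Set Implicit Arguments. Unset Strict Implicit. Unset Printing Implicit Defensive.

Section Basic.
Variable k : closedFieldType.
Variables n r : nat.
Variable P : 'I_r -> 'rV[k]_n.
Implicit Types (v : 'rV[k]_n) (f g a : {mpoly k[n]}).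

Lemma evD v f g : evalAt v (f + g) = evalAt v f + evalAt v g.
Proof. by rewrite /evalAt mevalD. Qed.
Lemma evB v f g : evalAt v (f - g) = evalAt v f - evalAt v g.
Proof. by rewrite /evalAt mevalB. Qed.
Lemma evM v f g : evalAt v (f * g) = evalAt v f * evalAt v g.
Proof. by rewrite /evalAt mevalM. Qed.
Lemma evZ v c f : evalAt v (c *: f) = c * evalAt v f.
Proof. by rewrite /evalAt mevalZ. Qed.
Lemma ev0 v : evalAt v (0 : {mpoly k[n]}) = 0.
Proof. by rewrite /evalAt meval0. Qed.
Lemma ev_sum v (I : finType) (F : I -> {mpoly k[n]}) :
  evalAt v (\sum_i F i) = \sum_i evalAt v (F i).
Proof. by rewrite /evalAt raddf_sum. Qed.
Lemma ev_sumP v (I : finType) (Q : pred I) (F : I -> {mpoly k[n]}) :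
  evalAt v (\sum_(i | Q i) F i) = \sum_(i | Q i) evalAt v (F i).
Proof. by rewrite /evalAt raddf_sum. Qed.
Lemma evX v j : evalAt v ('X_j : {mpoly k[n]}) = v 0 j.
Proof. by rewrite /evalAt mevalXU. Qed.
Lemma evC v c : evalAt v (c%:MP : {mpoly k[n]}) = c.
Proof. by rewrite /evalAt mevalC. Qed.

Lemma ev_homog q f t v : f \is q.-homog -> evalAt (t *: v) f = t ^+ q * evalAt v f.
Proof.
move=> /dhomogP H; rewrite /evalAt !mevalE mulr_sumr big_seq [RHS]big_seq.
apply: eq_bigr => m Hm; rewrite mulrCA; congr (_ * _).
rewrite (eq_bigr (fun i => t ^+ m i * v 0 i ^+ m i)); last first.
  by move=> i _; rewrite mxE exprMn.
by rewrite big_split /= prodrXr -mdegE (H m Hm).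
Qed.

Lemma I0 : inConeIdeal P 0.
Proof. by move=> i t; rewrite ev0. Qed.
Lemma ID f g : inConeIdeal P f -> inConeIdeal P g -> inConeIdeal P (f + g).
Proof. by move=> Hf Hg i t; rewrite evD Hf Hg addr0. Qed.
Lemma IB f g : inConeIdeal P f -> inConeIdeal P g -> inConeIdeal P (f - g).
Proof. by move=> Hf Hg i t; rewrite evB Hf Hg subr0. Qed.
Lemma IMl a f : inConeIdeal P f -> inConeIdeal P (a * f).
Proof. by move=> Hf i t; rewrite evM Hf mulr0. Qed.
Lemma IZ c f : inConeIdeal P f -> inConeIdeal P (c *: f).
Proof. by move=> Hf i t; rewrite evZ Hf mulr0. Qed.
Lemma Isum (I : finType) (F : I -> {mpoly k[n]}) :
  (forall i, inConeIdeal P (F i)) -> inConeIdeal P (\sum_i F i).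
Proof. by move=> H i t; rewrite ev_sum big1 // => j _; apply: H. Qed.

End Basic.
Section Homog.
Variable k : closedFieldType.
Variables n r : nat.
Variable P : 'I_r -> 'rV[k]_n.
Implicit Types (v : 'rV[k]_n) (f g a : {mpoly k[n]}).
Hypothesis Hc : [pchar k] =i pred0.

Lemma natr_inj_c i j : (i%:R : k) = j%:R -> i = j.
Proof.
wlog le : i j / (i <= j)%N.
  move=> W E; case: (leqP i j) => h; first exact: W.
  by apply/esym/W => //; apply: ltnW.
move=> E; apply/eqP; rewrite eqn_leq le /=.
case: (posnP (j - i)) => [/eqP|p0]; first by rewrite subn_eq0.
have: ((j - i)%:R : k) == 0 by rewrite natrB // E subrr.
case/(natf0_pchar p0) => p; by rewrite Hc.
Qed.

Lemma mderiv_homog q f j : f \is q.-homog -> mderiv j f \is q.-1.-homog.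
Proof.
move=> /dhomogP H; apply/dhomogP => m; rewrite mcoeff_msupp mcoeff_deriv.
case E: (f@_(m + U_(j))%MM == 0); first by rewrite (eqP E) mul0rn eqxx.
move=> _; have := H (m + U_(j))%MM; rewrite mcoeff_msupp E => /(_ isT).
move=> <-; change (mdeg m = (mdeg (m + U_(j))%MM).-1).
by rewrite mdegD mdeg1 addn1.
Qed.

Lemma pihomog_big q f : (msize f <= q)%N -> pihomog mdeg q f = 0.
Proof.
move=> h; rewrite pihomogE big_seq_cond big_pred0 // => m.
apply/negbTE/negP => /andP[Hm /eqP Hd]; have := msize_mdeg_lt Hm.
by rewrite Hd ltnNge h.
Qed.

Lemma ev_decomp t v f :
  evalAt (t *: v) f = \sum_(d < msize f) t ^+ d * evalAt v (pihomog mdeg d f).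
Proof.
rewrite {1}(pihomog_partitionE (leqnn (msize f))) ev_sum.
by apply: eq_bigr => d _; rewrite (ev_homog _ _ (pihomogP _ _ _)).
Qed.

Lemma I_pihomog q f : inConeIdeal P f -> inConeIdeal P (pihomog mdeg q f).
Proof.
move=> Hf i t; rewrite (ev_homog _ _ (pihomogP _ _ _)).
case: (ltnP q (msize f)) => hq; last by rewrite pihomog_big // ev0 mulr0.
pose a d := evalAt (P i) (pihomog mdeg d f).
pose p := \poly_(d < msize f) a d.
suff p0 : p = 0.
  by have := congr1 (fun s : {poly k} => s`_q) p0; rewrite coef_poly hq coef0 => aq0; rewrite -/(a q) aq0 mulr0.
apply/eqP; apply/negPn/negP => pn0.
have H1 : all (root p) [seq j%:R | j <- iota 0 (msize f)].
  apply/allP => x /mapP [j _ ->]; rewrite /root horner_poly.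
  apply/eqP; transitivity (evalAt (j%:R *: P i) f); last exact: Hf.
  by rewrite ev_decomp; apply: eq_bigr => d _; rewrite mulrC.
have H2 : uniq [seq (j%:R : k) | j <- iota 0 (msize f)].
  rewrite map_inj_uniq ?iota_uniq //; exact: natr_inj_c.
have := max_poly_roots pn0 H1 H2; rewrite size_map size_iota.
by move/leq_trans => /(_ _ (size_poly _ _)); rewrite ltnn.
Qed.

End Homog.
Section Sep.
Variable k : closedFieldType.
Variables n r : nat.
Variable P : 'I_r -> 'rV[k]_n.
Implicit Types (v u : 'rV[k]_n) (f g a : {mpoly k[n]}).

Definition Dir u f : {mpoly k[n]} := \sum_(j < n) u 0 j *: mderiv j f.
Definition Lin (c : 'cV[k]_n) : {mpoly k[n]} := \sum_(j < n) c j 0 *: 'X_j.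

Lemma DirD u f g : Dir u (f + g) = Dir u f + Dir u g.
Proof. by rewrite /Dir -big_split; apply: eq_bigr => j _; rewrite mderivD scalerDr. Qed.
Lemma DirZ u c f : Dir u (c *: f) = c *: Dir u f.
Proof. by rewrite /Dir scaler_sumr; apply: eq_bigr => j _; rewrite mderivZ !scalerA mulrC. Qed.
Lemma DirM u f g : Dir u (f * g) = Dir u f * g + f * Dir u g.
Proof.
rewrite /Dir mulr_suml mulr_sumr -big_split; apply: eq_bigr => j _.
by rewrite mderivM scalerDr -scalerAl -scalerAr.
Qed.
Lemma Dir_sum u (I : finType) (F : I -> {mpoly k[n]}) :
  Dir u (\sum_i F i) = \sum_i Dir u (F i).
Proof.
rewrite /Dir exchange_big /=; apply: eq_bigr => j _.
by rewrite (big_morph (mderiv j) (@mderivD _ _ j) (@mderiv0 _ _ j)) scaler_sumr.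
Qed.
Lemma Dir_linu (c : k) u1 u2 f : Dir (c *: u1 + u2) f = c *: Dir u1 f + Dir u2 f.
Proof.
rewrite /Dir scaler_sumr -big_split; apply: eq_bigr => j _.
by rewrite !mxE scalerDl scalerA.
Qed.
Lemma Dir_homog q u f : f \is q.-homog -> Dir u f \is q.-1.-homog.
Proof.
move=> hf; apply: rpred_sum => j _; apply: rpredZ; exact: mderiv_homog.
Qed.

Lemma ev_Dir v u f : evalAt v (Dir u f) = \sum_(j < n) u 0 j * evalAt v (mderiv j f).
Proof. by rewrite ev_sum; apply: eq_bigr => j _; rewrite evZ. Qed.

Lemma ev_Lin v c : evalAt v (Lin c) = (v *m c) 0 0.
Proof. by rewrite ev_sum mxE; apply: eq_bigr => j _; rewrite evZ evX mulrC. Qed.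

Lemma mderivXj (j j' : 'I_n) : mderiv j' ('X_j : {mpoly k[n]}) = (j == j')%:R%:MP.
Proof.
rewrite mderivX mnm1E; case: eqP => [->|_]; last by rewrite scale0r.
have -> : (U_(j') - U_(j') = 0 :> 'X_{1..n})%MM.
  by apply/mnmP => x; rewrite mnmBE mnm0E subnn.
by rewrite mpolyX0 scale1r.
Qed.

Lemma ev_Dir_Lin v u c : evalAt v (Dir u (Lin c)) = (u *m c) 0 0.
Proof.
rewrite ev_Dir mxE; apply: eq_bigr => j _; congr (_ * _).
rewrite (big_morph (mderiv j) (@mderivD _ _ j) (@mderiv0 _ _ j)) ev_sum (bigD1 j) //= big1 ?addr0.
  by rewrite mderivZ mderivXj eqxx evZ evC mulr1.
by move=> j' /negbTE ne; rewrite mderivZ mderivXj ne evZ evC mulr0.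
Qed.

Lemma lin_sep u v : ~~ (u <= v)%MS -> exists c : 'cV[k]_n, v *m c = 0 /\ (u *m c) 0 0 != 0.
Proof.
rewrite submxE => /negP nz.
have [j Hj] : exists j, (u *m cokermx v) 0 j != 0.
  case: (pickP (fun j => (u *m cokermx v) 0 j != 0)) => [j Hj|H]; first by exists j.
  exfalso; apply: nz; apply/eqP/matrixP => a b; rewrite ord1 [RHS]mxE.
  by move: (H b) => /negbFE/eqP.
exists (col j (cokermx v)); split.
  by rewrite colE mulmxA mulmx_coker mul0mx.
by rewrite colE mulmxA -colE mxE.
Qed.

End Sep.
Section Sep2.
Variable k : closedFieldType.
Variables n r : nat.
Variable P : 'I_r -> 'rV[k]_n.

Lemma ev_prod v (I : finType) (Q : pred I) (F : I -> {mpoly k[n]}) :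
  evalAt v (\prod_(i | Q i) F i) = \prod_(i | Q i) evalAt v (F i).
Proof. by rewrite /evalAt rmorph_prod. Qed.

Lemma sep (gp2 : forall i j, i != j -> forall c : k, P i != c *: P j) i (u : 'rV[k]_n) :
  (forall f, inConeIdeal P f -> evalAt (P i) (Dir u f) = 0) -> (u <= P i)%MS.
Proof.
move=> H; apply/negPn/negP => nu.
have [lam [l0 l1]] := lin_sep nu.
have mu : forall j, exists c : 'cV[k]_n, j != i -> P j *m c = 0 /\ (P i *m c) 0 0 != 0.
  move=> j; case: (eqVneq j i) => [->|ne]; first by exists 0.
  have : ~~ (P i <= P j)%MS.
    apply/negP => /sub_rVP [a Ha].
    by move: (gp2 i j (ltac:(by rewrite eq_sym)) a); rewrite Ha eqxx.
  by case/lin_sep => c [h1 h2]; exists c.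
have [muf Hmu] := fin_all_exists mu.
pose M := \prod_(j | j != i) Lin (muf j).
have If : inConeIdeal P (Lin lam * M).
  move=> j t; rewrite evM; case: (eqVneq j i) => [->|ne].
    by rewrite ev_Lin -scalemxAl mxE l0 mxE mulr0 mul0r.
  rewrite ev_prod (bigD1 j) //= [evalAt _ (Lin (muf j))]ev_Lin -scalemxAl mxE.
  by case: (Hmu j ne) => -> _; rewrite mxE !mulr0 mul0r mulr0.
have := H _ If; rewrite DirM evD evM evM ev_Lin l0 mxE mul0r addr0 ev_Dir_Lin.
apply/eqP; rewrite mulf_eq0 negb_or l1 /= ev_prod.
apply/prodf_neq0 => j ne; rewrite ev_Lin; by case: (Hmu j ne).
Qed.

End Sep2.
Section Lift.
Variable k : closedFieldType.
Variables n r : nat.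
Variable P : 'I_r -> 'rV[k]_n.

Lemma lift_ex d : imposes_conditions P d r ->
  exists F : 'I_r -> {mpoly k[n]}, (forall i, F i \is d.-homog) /\
    (forall i j, evalAt (P j) (F i) = (i == j)%:R).
Proof.
case=> B [fB rowsB _].
have [fa Hfa] := fin_all_exists rowsB.
have uB : B \in unitmx by rewrite -row_free_unit.
exists (fun i => \sum_a invmx B i a *: fa a); split.
  by move=> i; apply: rpred_sum => a _; apply: rpredZ; case: (Hfa a).
move=> i j; rewrite ev_sum.
have -> : (i == j)%:R = (invmx B *m B) i j :> k by rewrite mulVmx // mxE.
rewrite mxE; apply: eq_bigr => a _; rewrite evZ; congr (_ * _).
case: (Hfa a) => _ E; have := congr1 (fun M : 'rV[k]_r => M 0 j) E.
by rewrite !mxE => ->.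
Qed.

End Lift.

Section Phi.
Variable k : closedFieldType.
Variables n r : nat.
Variable P : 'I_r -> 'rV[k]_n.
Variable l : nat.
Variable F : nat -> 'I_r -> {mpoly k[n]}.
Hypothesis Fhom : forall d i, F d i \is d.-homog.
Implicit Types (W : 'M[k]_(r, n)) (f g a b h : {mpoly k[n]}).

Definition phi W f : {mpoly k[n]} :=
  \sum_(q < msize f) \sum_(i < r)
     evalAt (P i) (Dir (row i W) (pihomog mdeg q f)) *: F (q + l)%N i.

Lemma Dir0 u : Dir u (0 : {mpoly k[n]}) = 0.
Proof. by have := DirZ u 0 0; rewrite !scale0r. Qed.

Lemma mderiv_homog0 f j : f \is 0.-homog -> mderiv j f = 0.
Proof.
move=> hf; apply/mpolyP => m; rewrite mcoeff_deriv mcoeff0.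
rewrite (dhomog_nemf_coeff hf) ?mul0rn //.
change (mdeg (m + U_(j))%MM != 0%N); by rewrite mdegD mdeg1 addn1.
Qed.

Lemma Dir_homog0 u f : f \is 0.-homog -> Dir u f = 0.
Proof. by move=> hf; rewrite /Dir big1 // => j _; rewrite mderiv_homog0 // scaler0. Qed.

Definition Valid f := forall q, pihomog mdeg q f != 0 ->
  forall i j, evalAt (P j) (F (q + l)%N i) = (i == j)%:R.

Lemma phiE W f t i : Valid f ->
  evalAt (t *: P i) (phi W f) = t ^+ l.+1 * evalAt (t *: P i) (Dir (row i W) f).
Proof.
move=> V; rewrite {2}(pihomog_partitionE (leqnn (msize f))) Dir_sum.
rewrite ev_sum mulr_sumr ev_sum; apply: eq_bigr => q _.
have [->|nz] := eqVneq (pihomog mdeg q f) 0.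
  rewrite Dir0 ev0 mulr0 ev_sum big1 // => j _.
  by rewrite Dir0 ev0 scale0r ev0.
rewrite ev_sum (bigD1 i) //= big1 ?addr0; last first.
  move=> j ne; rewrite evZ (ev_homog _ _ (Fhom _ _)) V //.
  by rewrite (negbTE ne) mulr0 mulr0.
rewrite evZ (ev_homog _ _ (Fhom _ _)) V // eqxx mulr1.
case: q nz => [[|q] Hq] nz /=.
  by rewrite Dir_homog0 ?ev0 ?mulr0 ?mul0r // pihomogP.
rewrite (ev_homog _ _ (Dir_homog _ (pihomogP _ _ _))) /= mulrA -exprD.
by rewrite mulrC addnC addSnnS.
Qed.

End Phi.
Section PhiHom.
Variable k : closedFieldType.
Variables n r : nat.
Variable P : 'I_r -> 'rV[k]_n.
Variable l : nat.
Variable F : nat -> 'I_r -> {mpoly k[n]}.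
Hypothesis Fhom : forall d i, F d i \is d.-homog.

Lemma phi_hom W (HV : forall f, inConeIdeal P f -> Valid P l F f) :
  isHomIO P (phi P l F W).
Proof.
move=> f g a b If Ig i t.
have Ih : inConeIdeal P (a*f + b*g) := ID (IMl a If) (IMl b Ig).
rewrite evB evD !evM !phiE //; try by apply: HV.
rewrite !DirD !DirM !evD !evM (If i t) (Ig i t) !mulr0 !add0r.
by rewrite mulrDr [_ * (_ * _)]mulrCA [evalAt _ b * (_ * _)]mulrCA subrr.
Qed.

Lemma phi_deg W : homDeg P l (phi P l F W).
Proof.
move=> q f If hf; exists (phi P l F W f); split; last by rewrite subrr; exact: I0.
apply: rpred_sum => q' _; apply: rpred_sum => i _.
case: (eqVneq (q' : nat) q) => [e|ne]; first by rewrite e; apply/dhomogZ/Fhom.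
have ne' : q != q' by rewrite eq_sym.
by rewrite (pihomog_ne0 ne' hf) Dir0 ev0 scale0r dhomog0.
Qed.

End PhiHom.
Section Dim.
Variable k : closedFieldType.
Variables n' r : nat.
Variable P : 'I_r -> 'rV[k]_(n'.+1).

Lemma no_vanish d : imposes_conditions P d 'C(n'.+1 + d - 1, d) ->
  forall h : {mpoly k[n'.+1]}, h \is d.-homog -> (forall i, evalAt (P i) h = 0) -> h = 0.
Proof.
set s := 'C(_, _); case=> B [fB rowsB _].
have [fa Hfa] := fin_all_exists rowsB.
have key : forall c : 'I_s -> k, (forall j, evalAt (P j) (\sum_a c a *: fa a) = 0) ->
    forall a, c a = 0.
  move=> c Hc a.
  have : (\row_a c a) *m B = 0.
    apply/matrixP => i j; rewrite ord1 [RHS]mxE -(Hc j) ev_sum mxE.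
    apply: eq_bigr => b _; rewrite evZ mxE; congr (_ * _).
    by case: (Hfa b) => _ E; have := congr1 (fun M : 'rV[k]_r => M 0 j) E; rewrite !mxE.
  move/eqP; rewrite mulmx_free_eq0 // => /eqP /matrixP /(_ 0 a).
  by rewrite !mxE.
pose X : s.-tuple (dhomog n'.+1 k d) := [tuple DHomog (proj1 (Hfa a)) | a < s].
have nthX : forall a : 'I_s, mpoly_of_dhomog X`_a = fa a.
  by move=> a; rewrite -tnth_nth tnth_mktuple.
have fX : free X.
  apply/freeP => c Hc; apply: key => j.
  have E' : \sum_a c a *: fa a = 0.
    transitivity (mpoly_of_dhomog (\sum_(i < s) c i *: X`_i)); last by rewrite Hc raddf0.
    by rewrite raddf_sum; apply: eq_bigr => a _; rewrite -nthX.
  by rewrite E' ev0.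
have bX : basis_of fullv X.
  rewrite basisEfree fX subvf dimvf size_tuple /s /=.
  by rewrite addSn subn1 /= addnC.
move=> h hh h0.
pose hv : dhomog n'.+1 k d := DHomog hh.
have hX : hv \in span X by rewrite (span_basis bX) memvf.
have E := coord_span hX.
have : forall a, coord X a hv = 0.
  apply: key => j; rewrite -[RHS](h0 j); congr evalAt.
  transitivity (mpoly_of_dhomog hv); last by [].
  by rewrite [in RHS]E raddf_sum; apply: eq_bigr => a _; rewrite -nthX.
move=> c0; transitivity (mpoly_of_dhomog hv); first by [].
rewrite E raddf_sum big1 // => a _; by rewrite c0 scale0r raddf0.
Qed.

End Dim.
Lemma valid_lemma (k : closedFieldType) (n r : nat) (P : 'I_r -> 'rV[k]_n) (l : nat)
  (F : nat -> 'I_r -> {mpoly k[n]}) :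
  [pchar k] =i pred0 -> general_position P -> (0 < l)%N ->
  (forall d, imposes_conditions P d r -> forall i j, evalAt (P j) (F d i) = (i == j)%:R) ->
  forall f, inConeIdeal P f -> Valid P l F f.
Proof.
move=> Hc [gp1 gp2 gp3] l0 HF f If q nz; apply: HF.
have := gp3 (q + l)%N (ltn_addl _ l0).
suff -> : minn r 'C(n + (q + l) - 1, q + l) = r by [].
apply/minn_idPl; rewrite leqNgt; apply/negP => lt.
move: P gp1 gp2 gp3 F f If nz lt; case: n => [|n'] P gp1 gp2 gp3 F f If nz lt.
  have i0 : 'I_r by apply: (@Ordinal r 0); apply: leq_ltn_trans lt.
  by move: (gp1 i0); rewrite thinmx0 eqxx.
have := gp3 (q + l)%N (ltn_addl _ l0); rewrite (minn_idPr (ltnW lt)) => IC.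
pose m0 : 'X_{1..n'.+1} := (U_(@Ordinal n'.+1 0 isT) *+ l)%MM.
pose h := pihomog mdeg q f * 'X_[m0].
have hh : h \is (q + l)%N.-homog.
  apply: dhomogM; first exact: pihomogP.
  by rewrite dhomogX; change (mdeg m0 == l); rewrite mdegMn mdeg1 mul1n.
have h0 : forall i, evalAt (P i) h = 0.
  by move=> i; rewrite evM -[P i]scale1r (I_pihomog Hc q If i 1) mul0r.
have := no_vanish IC hh h0; apply/eqP; rewrite mulf_neq0 //.
apply/eqP => e; have := congr1 (fun p => p@_m0) e; rewrite mcoeffX eqxx mcoeff0.
by apply/eqP; exact: oner_neq0.
Qed.
Section LA.
Variable k : closedFieldType.
Variables n r : nat.
Variable P : 'I_r -> 'rV[k]_n.
Variables (d s : nat) (B : 'M[k]_(s, r)).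
Hypothesis sB : forall f : {mpoly k[n]}, f \is d.-homog -> (\row_(j < r) evalAt (P j) f <= B)%MS.

Definition T1 : 'M[k]_(s * n, r * n) := lin_mx (@mulmx _ r s n B^T).

Lemma Gsub (g : 'I_n -> {mpoly k[n]}) : (forall j, g j \is d.-homog) ->
  (mxvec (\matrix_(i, j) evalAt (P i) (g j)) <= T1)%MS.
Proof.
move=> hg.
have Hex : forall j, exists y : 'rV[k]_s, \row_i evalAt (P i) (g j) = y *m B.
  by move=> j; apply/submxP/sB/hg.
have [y Hy] := fin_all_exists Hex.
pose Y : 'M[k]_(s, n) := \matrix_(a, j) y j 0 a.
have -> : \matrix_(i, j) evalAt (P i) (g j) = B^T *m Y.
  apply/matrixP => i j; rewrite !mxE.
  have := congr1 (fun M : 'rV[k]_r => M 0 i) (Hy j); rewrite !mxE => ->.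
  by apply: eq_bigr => a _; rewrite !mxE mulrC.
by rewrite /T1 -mul_vec_lin submxMl.
Qed.

End LA.

Section T2.
Variable k : closedFieldType.
Variables n r : nat.
Variable P : 'I_r -> 'rV[k]_n.

Definition E2 (i : 'I_r) : 'M[k]_(r, n) := \matrix_(i', j) ((i' == i)%:R * P i 0 j).
Definition T2 : 'M[k]_(r, r * n) := \matrix_(i < r) mxvec (E2 i).

Lemma T2mul (y : 'rV[k]_r) : y *m T2 = mxvec (\matrix_(i, j) (y 0 i * P i 0 j)).
Proof.
rewrite mulmx_sum_row.
have -> : \matrix_(i, j) (y 0 i * P i 0 j) = \sum_i y 0 i *: E2 i.
  apply/matrixP => i j; rewrite !mxE summxE (bigD1 i) //= big1 ?addr0.
    by rewrite !mxE eqxx mul1r.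
  by move=> i' ne; rewrite !mxE eq_sym (negbTE ne) mul0r mulr0.
by rewrite linear_sum; apply: eq_bigr => i _; rewrite rowK linearZ.
Qed.

Lemma inj_row_free m0 p (A : 'M[k]_(m0, p)) : (forall y : 'rV[k]_m0, y *m A = 0 -> y = 0) -> row_free A.
Proof.
move=> H; rewrite -kermx_eq0; apply/eqP/row_matrixP => i; rewrite row0; apply: H.
by apply/sub_kermxP; exact: row_sub.
Qed.

Lemma T2_free : (forall i, P i != 0) -> row_free T2.
Proof.
move=> Pnz; apply: inj_row_free => y; rewrite T2mul => /eqP; rewrite mxvec_eq0 => /eqP E.
apply/rowP => i; rewrite mxE; apply/eqP/negPn/negP => yi.
have := Pnz i; apply/negP/negPn; apply/eqP/rowP => j; rewrite mxE.
have := congr1 (fun M : 'M[k]_(r, n) => M i j) E; rewrite !mxE => /eqP.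
by rewrite mulf_eq0 (negbTE yi) => /eqP.
Qed.

End T2.
Lemma arith (n r l m s1 s0 : nat) : (0 < l)%N -> (s1 <= 'C(n + l, l + 1))%N ->
  s0 = minn r 'C(n + l - 1, l) ->
  (m%:Z <= Num.max 0 ((n%:Z - 1) * (r%:Z - ('C(n + l, l + 1))%:Z) - ('C(n + l - 1, l + 1))%:Z)) ->
  (0 < m)%N -> (m + s1 * n + r <= r * n + s0)%N.
Proof.
move=> l0 hs1 hs0 Hm m0.
have pas : 'C(n + l, l + 1) = ('C(n + l - 1, l) + 'C(n + l - 1, l + 1))%N.
  have e : ((n + l - 1).+1 = n + l)%N by lia.
  by rewrite -{1}e addn1 binS addnC.
have Hm' : m%:Z <= (n%:Z - 1) * (r%:Z - ('C(n + l, l + 1))%:Z) - ('C(n + l - 1, l + 1))%:Z.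
  move: Hm; rewrite le_max => /orP [H|//]; exfalso; move: H m0; lia.
move: Hm' hs1 hs0; clear Hm; rewrite pas; clear pas.
set C0 := 'C(_, l); set C2 := 'C(_, l + 1) => Hm hs1 hs0.
have hn0 : n = 0%N -> C0 = 0%N /\ C2 = 0%N.
  by move=> e; rewrite /C0 /C2 e !bin_small //; lia.
clearbody C0 C2.
case: n Hm hs1 hs0 hn0 => [|[|n]] Hm hs1 hs0 hn0.
- exfalso; case: (hn0 erefl) => e1 e2; move: Hm m0; rewrite e1 e2; lia.
- exfalso; move: Hm m0; lia.
have rC : (C0 + C2 < r)%N.
  rewrite ltnNge; apply/negP => H; move: Hm m0 H; nia.
have -> : s0 = C0 by rewrite hs0; apply/minn_idPr; lia.
move: Hm hs1 rC; nia.
Qed.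
Unset Implicit Arguments.

Theorem mainTheorem7 (k : closedFieldType) (n r : nat) (P : 'I_r -> 'rV[k]_n)
  (l m : nat) :
  [pchar k] =i pred0 ->
  general_position P ->
  (0 < l)%N ->
  (m%:Z <= Num.max 0 ((n%:Z - 1) * (r%:Z - ('C(n + l, l + 1))%:Z)
                       - ('C(n + l - 1, l + 1))%:Z)) ->
  T1_dim_ge P l m.
Proof.
move=> Hc gp l0 Hm.
have gp' := gp; case: gp' => [gp1 gp2 gp3].
have Fex : forall d, exists F0 : 'I_r -> {mpoly k[n]}, (forall i, F0 i \is d.-homog) /\
    (imposes_conditions P d r -> forall i j, evalAt (P j) (F0 i) = (i == j)%:R).
  move=> d; case: (classic (imposes_conditions P d r)) => [H|H].
    by have [F0 [h1 h2]] := lift_ex H; exists F0.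
  by exists (fun _ => 0); split => // i; exact: dhomog0.
pose F d := proj1_sig (constructive_indefinite_description _ (Fex d)).
have Fhom : forall d i, F d i \is d.-homog.
  by move=> d i; case: (proj2_sig (constructive_indefinite_description _ (Fex d))) => h _; exact: h.
have Fdel : forall d, imposes_conditions P d r -> forall i j, evalAt (P j) (F d i) = (i == j)%:R.
  by move=> d; case: (proj2_sig (constructive_indefinite_description _ (Fex d))) => _ h; exact: h.
have HV := valid_lemma Hc gp l0 Fdel.
have [B1 [fB1 rB1 sB1]] := gp3 (l + 1)%N (ltac:(by rewrite addn1)).
have [B0 [fB0 rB0 sB0]] := gp3 l l0.
set s1 := minn r _ in B1 fB1 rB1 sB1.
set s0 := minn r _ in B0 fB0 rB0 sB0.
pose TT1 := T1 n B1.
pose TT2 := T2 P.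
pose U := (TT1 + TT2)%MS.
have hT2 : row_free TT2 by apply: T2_free.
have Y0T1 : (B0 *m TT2 <= TT1)%MS.
  apply/row_subP => b; rewrite row_mul.
  have [hb [hbh hbr]] := rB0 b.
  rewrite hbr T2mul.
  have -> : \matrix_(i, j) ((\row_j0 evalAt (P j0) hb) 0 i * P i 0 j) =
            \matrix_(i, j) evalAt (P i) (hb * 'X_j) :> 'M[k]_(r, n).
    by apply/matrixP => i j; rewrite !mxE evM evX.
  apply: (Gsub sB1) => j; apply: dhomogM => //.
  by rewrite dhomogX; change (mdeg (U_(j))%MM == 1%N); rewrite mdeg1.
have rcap : (s0 <= \rank (TT1 :&: TT2))%N.
  have : (B0 *m TT2 <= TT1 :&: TT2)%MS by rewrite sub_capmx Y0T1 submxMl.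
  move/mxrankS; rewrite mxrankMfree //; move/eqP: fB0 => ->.
  done.
have rU : (\rank U + s0 <= s1 * n + r)%N.
  have := mxrank_sum_cap TT1 TT2; rewrite -/U => e.
  have h1 := rank_leq_row TT1; have h2 := rank_leq_row TT2.
  lia.
have mrk : (m <= \rank (U^C)%MS)%N.
  rewrite mxrank_compl.
  case: (posnP m) => [->//|m0].
  have hs1 : (s1 <= 'C(n + l, l + 1))%N.
    by rewrite /s1 addnA addn1 subn1 /= geq_minr.
  have := arith l0 hs1 (erefl s0) Hm m0.
  lia.
pose rk := \rank (U^C)%MS.
pose C := row_base (U^C)%MS.
pose Csel : 'M[k]_(m, r * n) := pid_mx m *m C.
have fCsel : row_free Csel.
  by rewrite /row_free mxrankMfree ?row_base_free // rank_pid_mx.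
have CselU : (Csel <= U^C)%MS.
  by apply: submx_trans (submxMl _ _) _; rewrite eq_row_base.
pose W (j : 'I_m) : 'M[k]_(r, n) := vec_mx (row j Csel).
exists (fun j => phi P l F (W j)); split.
  move=> j; split; first exact: (phi_hom Fhom (W j) HV).
  exact: phi_deg.
move=> c g hg H.
pose V := \sum_j c j *: W j.
pose gP (i : 'I_r) : 'rV[k]_n := \row_j0 evalAt (P i) (g j0).
have key : forall i, (row i V - gP i <= P i)%MS.
  move=> i; apply: (sep gp2) => f If.
  have E1 : forall j, evalAt (1 *: P i) (c j *: phi P l F (W j) f) =
      c j * \sum_j0 W j i j0 * evalAt (P i) (mderiv j0 f).
    move=> j; rewrite evZ phiE //; last exact: HV.
    rewrite expr1n mul1r scale1r ev_Dir; congr (_ * _).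
    by apply: eq_bigr => j0 _; rewrite mxE.
  have E2 : evalAt (1 *: P i) (derivApply g f) =
      \sum_j0 evalAt (P i) (g j0) * evalAt (P i) (mderiv j0 f).
    by rewrite scale1r /derivApply ev_sum; apply: eq_bigr => j0 _; rewrite evM.
  have := H f If i 1; rewrite evB ev_sum (eq_bigr _ (fun j _ => E1 j)) E2 => H0.
  rewrite ev_Dir -[RHS]H0.
  rewrite (eq_bigr (fun j0 => (\sum_j c j * W j i j0) * evalAt (P i) (mderiv j0 f)
              - evalAt (P i) (g j0) * evalAt (P i) (mderiv j0 f))); last first.
    move=> j0 _; rewrite !mxE summxE mulrBl; congr (_ * _ - _).
    by apply: eq_bigr => j _; rewrite mxE.
  rewrite sumrB; congr (_ - _).
  rewrite (eq_bigr (fun j0 => \sum_j c j * (W j i j0 * evalAt (P i) (mderiv j0 f)))); last first.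
    by move=> j0 _; rewrite mulr_suml; apply: eq_bigr => j _; rewrite mulrA.
  by rewrite exchange_big; apply: eq_bigr => j _; rewrite mulr_sumr.
have Hex : forall i, exists a : k, row i V - gP i = a *: P i.
  by move=> i; apply/sub_rVP/key.
have [a Ha] := fin_all_exists Hex.
have VU : (mxvec V <= U)%MS.
  have -> : V = \matrix_(i, j0) evalAt (P i) (g j0) + \matrix_(i, j0) (a i * P i 0 j0).
    apply/matrixP => i j0; have := congr1 (fun M : 'rV[k]_n => M 0 j0) (Ha i).
    by rewrite !mxE => e; rewrite -e addrC subrK.
  rewrite linearD /=; apply: addmx_sub_adds; first exact: (Gsub sB1).
  have -> : \matrix_(i, j0) (a i * P i 0 j0) =
            \matrix_(i, j0) ((\row_i0 a i0) 0 i * P i 0 j0) :> 'M[k]_(r, n).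
    by apply/matrixP => i j0; rewrite !mxE.
  by rewrite -T2mul submxMl.
have eV : mxvec V = (\row_j c j) *m Csel.
  rewrite mulmx_sum_row /V linear_sum; apply: eq_bigr => j _.
  rewrite /W mxE -{2}[row j Csel]vec_mxK; exact: linearZ.
have VC : (mxvec V <= U^C)%MS by rewrite eV; apply: submx_trans (submxMl _ _) CselU.
have : (mxvec V <= U :&: U^C)%MS by rewrite sub_capmx VU VC.
rewrite capmx_compl submx0 eV mulmx_free_eq0 // => /eqP/rowP => e j.
by have := e j; rewrite !mxE.
Qed.
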